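(* Let $K_1,\dots,K_M$ be matrices with $K_i\in\mathbb{R}^{p\times d_i}$ having orthonormal columns, and suppose $\mathrm{span}[K_1\,K_2\,\cdots\,K_M]=\mathbb{R}^p$. Let $A_i=\{\mathbf a\in\mathbb{R}^p:\ \exists\,\alpha^i\in\mathbb{R}^{d_i},\ \mathbf a=K_i\alpha^i,\ \|\mathbf a\|=\|\alpha^i\|=1\}$ and $\mathcal A=\bigcup_{i=1}^M A_i$. Then for every $\mathbf x\in\mathbb{R}^p$ the atomic norm satisfies \[\|\mathbf x\|_{\mathcal A}=\min_{\mathbf x=\sum_i K_i\alpha^i}\ \sum_{i=1}^M\|\alpha^i\|,\] where the minimum is over all families $\alpha^i\in\mathbb{R}^{d_i}$, $i=1,\dots,M$, with $\mathbf x=\sum_i K_i\alpha^i$.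
   Context: For a set of atoms $\mathcal A\subset\mathbb{R}^p$, the atomic norm of $\mathbf x\in\mathbb{R}^p$ is $\|\mathbf x\|_{\mathcal A}=\inf\{\sum_{\mathbf a\in\mathcal A}c_{\mathbf a}:\ \mathbf x=\sum_{\mathbf a\in\mathcal A}c_{\mathbf a}\mathbf a,\ c_{\mathbf a}\ge 0\}$ (only countably many, in fact finitely many, $c_{\mathbf a}$ nonzero). All norms without subscript are Euclidean norms. *)

(* Defs.v *)
From HB Require Import structures.
From mathcomp Require Import all_boot all_order all_algebra.
From mathcomp Require Import classical_sets reals.
Set Implicit Arguments. Unset Strict Implicit. Unset Printing Implicit Defensive.
Import Order.TTheory GRing.Theory Num.Theory.
Local Open Scope ring_scope.
Local Open Scope classical_set_scope.

Definition enorm (R : realType) (n : nat) (v : 'cV[R]_n) : R :=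
  Num.sqrt (\sum_(j < n) v j 0 ^+ 2).

Definition atoms (R : realType) (p M : nat) (d : 'I_M -> nat)
  (K : forall i : 'I_M, 'M[R]_(p, d i)) : set 'cV[R]_p :=
  [set a | exists i : 'I_M, exists alpha : 'cV[R]_(d i),
      a = K i *m alpha /\ enorm a = 1 /\ enorm alpha = 1].

Definition atomic_norm (R : realType) (p : nat) (A : set 'cV[R]_p)
  (x : 'cV[R]_p) : R :=
  inf [set t : R | exists s : seq (R * 'cV[R]_p),
        (forall ca, ca \in s -> 0 <= ca.1 /\ A ca.2) /\
        x = \sum_(ca <- s) ca.1 *: ca.2 /\
        t = \sum_(ca <- s) ca.1].

(* Main.v *)
Require Import Defs.
From HB Require Import structures.
From mathcomp Require Import all_boot all_order all_algebra.
From mathcomp Require Import boolp classical_sets reals topology normedtype derive realfun function_spaces.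
From mathcomp Require Import ring lra.
Import Order.TTheory GRing.Theory Num.Theory.
Import numFieldNormedType.Exports.
Local Open Scope ring_scope.
Local Open Scope classical_set_scope.

Section E.
Context {R : realType}.

Lemma lagrange n (f g : 'I_n -> R) :
  (\sum_i f i * g i) ^+ 2 <= (\sum_i f i ^+ 2) * (\sum_i g i ^+ 2).
Proof.
have E1 : (\sum_i f i ^+ 2) * (\sum_i g i ^+ 2) =
   \sum_i \sum_j (f i ^+ 2 * g j ^+ 2).
  by rewrite big_distrl; apply: eq_bigr => i _; rewrite big_distrr.
have E2 : (\sum_i f i ^+ 2) * (\sum_i g i ^+ 2) =
   \sum_i \sum_j (f j ^+ 2 * g i ^+ 2).
  by rewrite mulrC big_distrl; apply: eq_bigr => i _; rewrite big_distrr;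
     apply: eq_bigr => j _; rewrite mulrC.
have E3 : (\sum_i f i * g i) ^+ 2 = \sum_i \sum_j ((f i * g i) * (f j * g j)).
  by rewrite expr2 big_distrl; apply: eq_bigr => i _; rewrite big_distrr.
have H : 0 <= \sum_i \sum_j (f i * g j - f j * g i) ^+ 2.
  by apply: sumr_ge0 => i _; apply: sumr_ge0 => j _; apply: sqr_ge0.
have H2 : \sum_i \sum_j (f i * g j - f j * g i) ^+ 2 =
   (\sum_i f i ^+ 2) * (\sum_i g i ^+ 2) + (\sum_i f i ^+ 2) * (\sum_i g i ^+ 2)
   - 2 * (\sum_i f i * g i) ^+ 2.
  rewrite {1}E1 E2 E3 mulr_sumr -big_split -sumrB /=.
  apply: eq_bigr => i _; rewrite mulr_sumr -big_split -sumrB /=.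
  by apply: eq_bigr => j _; ring.
lra.
Qed.

Lemma enorm_ge0 {n} (v : 'cV[R]_n) : 0 <= enorm v.
Proof. exact: sqrtr_ge0. Qed.

Lemma enorm_sq {n} (v : 'cV[R]_n) : enorm v ^+ 2 = \sum_j v j 0 ^+ 2.
Proof. by rewrite /enorm sqr_sqrtr // sumr_ge0 // => j _; apply: sqr_ge0. Qed.

Lemma enorm_triangle {n} (u v : 'cV[R]_n) : enorm (u + v) <= enorm u + enorm v.
Proof.
have L := @lagrange n (fun j => u j 0) (fun j => v j 0).
rewrite /= -!enorm_sq in L.
have hu := enorm_ge0 u; have hv := enorm_ge0 v.
have H : \sum_j u j 0 * v j 0 <= enorm u * enorm v.
  rewrite -exprMn in L; move: L (mulr_ge0 hu hv).
  move: (\sum_j _) (enorm u * enorm v) => S c L hc.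
  case: (lerP S c) => // hSc; have : c ^+ 2 < S ^+ 2.
    by rewrite ltr_pXn2r // ?nnegrE //; lra.
  lra.
rewrite {1}/enorm -(ger0_norm (addr_ge0 hu hv)) -sqrtr_sqr ler_sqrt; last first.
  by apply: sqr_ge0.
have -> : \sum_j (u + v) j 0 ^+ 2 = \sum_j u j 0 ^+ 2 + \sum_j v j 0 ^+ 2
   + 2 * \sum_j u j 0 * v j 0.
  rewrite mulr_sumr -!big_split /=; apply: eq_bigr => j _; rewrite mxE; ring.
rewrite -!enorm_sq; nra.
Qed.

Lemma enorm0 {n} : enorm (0 : 'cV[R]_n) = 0.
Proof. by rewrite /enorm big1 ?sqrtr0 // => j _; rewrite mxE expr0n. Qed.

Lemma enorm_sum {I : Type} {n} (s : seq I) (P : pred I) (F : I -> 'cV[R]_n) :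
  enorm (\sum_(x <- s | P x) F x) <= \sum_(x <- s | P x) enorm (F x).
Proof.
apply: (big_ind2 (fun u r => enorm u <= r)); first by rewrite enorm0.
  by move=> u1 r1 u2 r2 h1 h2; apply: le_trans (enorm_triangle _ _) _; apply: lerD.
by [].
Qed.

Lemma enormZ {n} (a : R) (v : 'cV[R]_n) : enorm (a *: v) = `|a| * enorm v.
Proof.
rewrite /enorm -sqrtr_sqr -sqrtrM ?sqr_ge0 //; congr Num.sqrt.
by rewrite mulr_sumr; apply: eq_bigr => j _; rewrite mxE exprMn.
Qed.

Lemma enorm_coord {n} (v : 'cV[R]_n) j : `|v j 0| <= enorm v.
Proof.
rewrite /enorm -sqrtr_sqr ler_sqrt; last by apply: sumr_ge0 => k _; apply: sqr_ge0.
by rewrite (bigD1 j) //= lerDl sumr_ge0 // => k _; apply: sqr_ge0.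
Qed.

Lemma enorm_eq0 {n} (v : 'cV[R]_n) : enorm v = 0 -> v = 0.
Proof.
move=> h; apply/matrixP => j k; rewrite (ord1 k) mxE.
by apply/eqP; rewrite -normr_le0 -h enorm_coord.
Qed.

Lemma enorm_tr {n} (v : 'cV[R]_n) : enorm v = Num.sqrt ((v^T *m v) 0 0).
Proof.
by rewrite /enorm mxE; congr Num.sqrt; apply: eq_bigr => j _; rewrite mxE expr2.
Qed.

Lemma enorm_mx {m n} (K : 'M[R]_(m, n)) (v : 'cV[R]_n) :
  K^T *m K = 1%:M -> enorm (K *m v) = enorm v.
Proof.
by move=> h; rewrite !enorm_tr trmx_mul -mulmxA (mulmxA K^T) h mul1mx.
Qed.
End E.

Section T.
Variable R : realType.

Lemma mx_cont (T : topologicalType) m n (f : T -> 'M[R]_(m, n)) :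
  (forall i j, continuous (fun t => f t i j)) -> continuous f.
Proof.
move=> hf t A [P /= hP sPA].
have : \forall s \near t, forall ij : 'I_m * 'I_n, P ij.1 ij.2 (f s ij.1 ij.2).
  apply: filter_forall => -[i j]; exact: (hf i j t _ (hP i j)).
by apply: filterS => s hs; apply: sPA => i j; exact: (hs (i, j)).
Qed.

Lemma cont_sum (T : topologicalType) (I : Type) (s : seq I) (P : pred I)
  (F : I -> T -> R) : (forall i, continuous (F i)) ->
  continuous (fun t => \sum_(i <- s | P i) F i t).
Proof.
move=> hF; elim: s => [|a s IH].
  have -> : (fun t => \sum_(i <- [::] | P i) F i t) = (fun=> 0).
    by apply: funext => t; rewrite big_nil.
  exact: cst_continuous.
have -> : (fun t => \sum_(i <- a :: s | P i) F i t) = (fun t =>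
   if P a then F a t + \sum_(i <- s | P i) F i t else \sum_(i <- s | P i) F i t).
  by apply: funext => t; rewrite big_cons.
case: (P a) => //.
by move=> t; apply: continuousD; [exact: hF | exact: IH].
Qed.

Lemma cV_box_compact n (c : R) :
  compact [set v : 'cV[R]_n | forall j, `|v j 0| <= c].
Proof.
have hr : compact [set w : 'rV[R]_n | forall j, `[-c, c]%classic (w 0 j)].
  by apply: (@rV_compact _ _ (fun=> `[-c, c]%classic)) => _; apply: segment_compact.
have -> : [set v : 'cV[R]_n | forall j, `|v j 0| <= c] = trmx @` [set w : 'rV[R]_n | forall j, `[-c, c]%classic (w 0 j)].
  apply/seteqP; split => v /=.
    move=> hv; exists v^T; last by rewrite trmxK.
    by move=> j; rewrite /= in_itv /= mxE -ler_norml.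
  case=> w hw <- j; have := hw j; rewrite /= in_itv /= mxE ler_norml //.
apply: continuous_compact => //; apply: continuous_subspaceT.
apply: mx_cont => i j.
have -> : (fun t : 'rV[R]_n => t^T i j) = (fun t => t j i).
  by apply: funext => t; rewrite mxE.
exact: coord_continuous.
Qed.

Import ArrowAsProduct.

Lemma proj_coord (M : nat) (d : 'I_M -> nat) i l k :
  continuous (fun b : forall i : 'I_M, 'cV[R]_(d i) => b i l k).
Proof.
move=> b; apply: (continuous_comp (f := fun b : forall i : 'I_M, 'cV[R]_(d i) => b i)
   (g := fun v : 'cV[R]_(d i) => v l k)).
  exact: proj_continuous.
exact: coord_continuous.
Qed.

Lemma F_cont (M : nat) (d : 'I_M -> nat) :
  continuous (fun b : forall i : 'I_M, 'cV[R]_(d i) => \sum_i enorm (b i)).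
Proof.
apply: cont_sum => i b.
apply: (continuous_comp (f := fun b : forall i : 'I_M, 'cV[R]_(d i) => \sum_j b i j 0 ^+ 2)
   (g := Num.sqrt)); last exact: sqrt_continuous.
move: b; apply: cont_sum => j b.
have -> : (fun b : forall i : 'I_M, 'cV[R]_(d i) => b i j 0 ^+ 2) =
   (fun b => b i j 0 * b i j 0) by apply: funext => b'; rewrite expr2.
by apply: continuousM; apply: proj_coord.
Qed.

Lemma constr_closed (M p : nat) (d : 'I_M -> nat) (K : forall i, 'M[R]_(p, d i))
  (x : 'cV[R]_p) :
  closed [set b : forall i : 'I_M, 'cV[R]_(d i) | x = \sum_i K i *m b i].
Proof.
have -> : [set b : forall i : 'I_M, 'cV[R]_(d i) | x = \sum_i K i *m b i] =
  \bigcap_(r in [set: 'I_p])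
    ((fun b : forall i : 'I_M, 'cV[R]_(d i) => \sum_i \sum_l K i r l * b i l 0)
       @^-1` [set y | y = x r 0]).
  apply/seteqP; split => b /=.
    move=> -> r _ /=; rewrite summxE; apply: eq_bigr => i _; rewrite mxE //.
  move=> h; apply/matrixP => r k; rewrite (ord1 k) -(h r I) summxE.
  by apply: eq_bigr => i _; rewrite mxE.
apply: closed_bigI => r _; apply: preimage_closed; last exact: closed_eq.
move=> b _; move: b; apply: cont_sum => i; apply: cont_sum => l b.
apply: continuousM; first exact: cst_continuous.
exact: proj_coord.
Qed.

Lemma exists_min (M p : nat) (d : 'I_M -> nat) (K : forall i, 'M[R]_(p, d i))
  (x : 'cV[R]_p) (b0 : forall i, 'cV[R]_(d i)) :
  x = \sum_i K i *m b0 i ->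
  exists a : forall i, 'cV[R]_(d i), x = \sum_i K i *m a i /\
    forall b : forall i, 'cV[R]_(d i), x = \sum_i K i *m b i ->
      \sum_i enorm (a i) <= \sum_i enorm (b i).
Proof.
move=> hb0; set c := \sum_i enorm (b0 i).
pose S := [set b : forall i : 'I_M, 'cV[R]_(d i) |
     forall i, [set v : 'cV[R]_(d i) | forall j, `|v j 0| <= c] (b i)]
   `&` [set b | x = \sum_i K i *m b i].
have cS : compact S.
  apply: compact_closedI; last exact: constr_closed.
  by apply: (@tychonoff _ (fun i => 'cV[R]_(d i)) (fun i => [set v : 'cV[R]_(d i) | forall j, `|v j 0| <= c])) => i; apply: cV_box_compact.
have hle : forall b : forall i, 'cV[R]_(d i), forall i j,
   `|b i j 0| <= \sum_i enorm (b i).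
  move=> b i j; apply: (le_trans (enorm_coord (b i) j)).
  by rewrite (bigD1 i) //= lerDl sumr_ge0 // => k _; apply: enorm_ge0.
have S0 : S !=set0 by exists b0; split => //= i j; apply: hle.
have [a aS amin] := compact_EVT_min S0 cS (continuous_subspaceT (F_cont M d)).
move: aS; rewrite inE => -[_ ha]; exists a; split => // b hb.
have [//|hlt] := lerP (\sum_i enorm (a i)) (\sum_i enorm (b i)).
have : b \in S.
  rewrite inE; split => //= i j; apply: le_trans (hle b i j) _.
  apply: ltW; apply: lt_le_trans hlt _.
  by apply: amin; rewrite inE; split => //= i' j'; apply: hle.
by move/amin; rewrite leNgt hlt.
Qed.
End T.

Section M.
Variable R : realType.

Lemma KKt p n (K : 'M[R]_(p, n)) (alpha : 'cV[R]_n) :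
  K^T *m K = 1%:M -> K *m (K^T *m (K *m alpha)) = K *m alpha.
Proof. by move=> h; rewrite (mulmxA K^T) h mul1mx. Qed.

Lemma lower_claim (p M : nat) (d : 'I_M -> nat)
  (K : forall i : 'I_M, 'M[R]_(p, d i))
  (Horth : forall i : 'I_M, (K i)^T *m K i = 1%:M)
  (s : seq (R * 'cV[R]_p)) :
  (forall ca, ca \in s -> 0 <= ca.1 /\ atoms K ca.2) ->
  exists beta : forall i : 'I_M, 'cV[R]_(d i),
    \sum_(ca <- s) ca.1 *: ca.2 = \sum_i K i *m beta i /\
    \sum_i enorm (beta i) <= \sum_(ca <- s) ca.1.
Proof.
elim: s => [|[c v] s IH] hs.
  exists (fun i => 0); rewrite !big_nil; split.
    by rewrite big1 // => i _; rewrite mulmx0.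
  by rewrite big1 // => i _; rewrite enorm0.
have [|beta [hb1 hb2]] := IH.
  by move=> ca hca; apply: hs; rewrite inE hca orbT.
have [/= c0 [i [alpha [hv [_ ha]]]]] := hs (c, v) (mem_head _ _).
exists (fun k => beta k + (if k == i then c else 0) *: ((K k)^T *m v)).
rewrite !big_cons /=; split.
  rewrite hb1.
  under eq_bigr => k _ do rewrite mulmxDr.
  rewrite big_split /= addrC; congr (_ + _).
  rewrite (bigD1 i) //= eqxx big1 ?addr0.
    by rewrite -scalemxAr hv KKt.
  by move=> k /negbTE ->; rewrite scale0r mulmx0.
apply: le_trans (_ : \sum_k (enorm (beta k) +
   enorm ((if k == i then c else 0) *: ((K k)^T *m v))) <= _).
  by apply: ler_sum => k _; apply: enorm_triangle.
rewrite big_split /= addrC lerD //.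
rewrite (bigD1 i) //= eqxx big1 ?addr0.
  by rewrite enormZ hv (mulmxA (K i)^T) Horth mul1mx ha mulr1 ger0_norm.
by move=> k /negbTE ->; rewrite scale0r enorm0.
Qed.
End M.

Theorem lemma1 (R : realType) (p M : nat) (d : 'I_M -> nat)
  (K : forall i : 'I_M, 'M[R]_(p, d i))
  (Horth : forall i : 'I_M, (K i)^T *m K i = 1%:M)
  (Hspan : forall x : 'cV[R]_p, exists alpha : forall i : 'I_M, 'cV[R]_(d i),
      x = \sum_(i < M) K i *m alpha i) :
  forall x : 'cV[R]_p,
    exists alpha : forall i : 'I_M, 'cV[R]_(d i),
      x = \sum_(i < M) K i *m alpha i /\
      (forall beta : forall i : 'I_M, 'cV[R]_(d i),
          x = \sum_(i < M) K i *m beta i ->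
          \sum_(i < M) enorm (alpha i) <= \sum_(i < M) enorm (beta i)) /\
      atomic_norm (atoms K) x = \sum_(i < M) enorm (alpha i).
Proof.
move=> x.
have [b0 hb0] := Hspan x.
have [a [ha amin]] := @exists_min R M p d K x b0 hb0.
exists a; split => //; split => //.
rewrite /atomic_norm.
set m := \sum_i enorm (a i).
set T := [set t : R | _].
have memT : T m.
  exists (map (fun i => (enorm (a i), K i *m ((enorm (a i))^-1 *: a i)))
             (seq.filter (fun i => enorm (a i) != 0) (index_enum 'I_M))).
  split; last split.
  - move=> ca /mapP [i]; rewrite mem_filter => /andP [hi _] -> /=.
    split; first exact: enorm_ge0.
    exists i, ((enorm (a i))^-1 *: a i); split => //.
    have h1 : enorm ((enorm (a i))^-1 *: a i) = 1.
      by rewrite enormZ ger0_norm ?invr_ge0 ?enorm_ge0 // mulVf.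
    by rewrite enorm_mx.
  - rewrite big_map big_filter ha.
    rewrite (bigID (fun i => enorm (a i) != 0)) /= [X in _ + X]big1 ?addr0.
      apply: eq_bigr => i hi.
      by rewrite -scalemxAr scalerA mulfV // scale1r.
    by move=> i; rewrite negbK => /eqP /enorm_eq0 ->; rewrite mulmx0.
  - rewrite big_map big_filter /m.
    rewrite (bigID (fun i => enorm (a i) != 0)) /= [X in _ + X]big1 ?addr0 //.
    by move=> i; rewrite negbK => /eqP.
have lbT : lbound T m.
  move=> t [s [hs [hx ->]]].
  have [beta [h1 h2]] := @lower_claim R p M d K Horth s hs.
  by apply: le_trans (amin beta _) h2; rewrite hx h1.
apply/eqP; rewrite eq_le; apply/andP; split.
  by apply: ge_inf => //; exists m.
by apply: lb_le_inf => //; exists m.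
Qed.
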